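(* For $n\ge 2$, $$\sum_{v\in A_n}x^{\ell_{T(A_n)}(v)}=\sum_{k=0}^{n}a(n,k)\,x^k=\prod_{t=2}^{n-1}(1+tx).$$
   Context: $A_n$ is the alternating group on $\{1,\dots,n\}$, $T(A_n)=\{(1\,2)(i\,j)\mid 1\le i<j\le n\}$, $\ell_{T(A_n)}(v)=\min\{r\ge 0\mid v=t_1\cdots t_r,\ t_i\in T(A_n)\}$, and $a(n,k)$ is the number of $v\in A_n$ with $\ell_{T(A_n)}(v)=k$. An empty product equals $1$. *)

(* Defs.v *)
From mathcomp Require Import all_boot all_order all_algebra all_fingroup all_solvable.
From Stdlib Require Import ClassicalEpsilon.
Set Implicit Arguments. Unset Strict Implicit. Unset Printing Implicit Defensive.
Import GRing.Theory.

(* Points 1..n of the paper are the ordinals 0..n-1 of 'I_n; so the paper's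
   transposition (1 2) is tperm a b with val a = 0, val b = 1. *)

Definition TAn (n : nat) : {set {perm 'I_n}} :=
  [set s : {perm 'I_n} | [exists a : 'I_n, exists b : 'I_n, exists i : 'I_n,
     exists j : 'I_n, [&& val a == 0%N, val b == 1%N, (i < j)%N &
                         s == (tperm a b * tperm i j)%g]]].

Fixpoint prodsT (n r : nat) : {set {perm 'I_n}} :=
  match r with
  | 0 => [set 1%g]
  | r'.+1 => [set (x * t)%g | x in prodsT n r', t in TAn n]
  end.

(* ell_{T(A_n)}(v) = min { r | v = t_1 ... t_r, t_i in T(A_n) }
   (0 by convention if no such r exists; never happens for v in A_n) *)
Definition ellT (n : nat) (v : {perm 'I_n}) : nat :=
  match excluded_middle_informative (exists r, v \in prodsT n r) with
  | left H => ex_minn (P := fun r => v \in prodsT n r) H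
  | right _ => 0
  end.

Definition aT (n k : nat) : nat :=
  #|[set v in Alt ('I_n) | ellT v == k]|.

(* Main.v *)
Require Import Defs.
From mathcomp Require Import all_boot all_order all_algebra all_fingroup all_solvable.
From mathcomp Require Import zify ring.
From Stdlib Require Import ClassicalEpsilon.
Import GRing.Theory.
Set Implicit Arguments. Unset Strict Implicit. Unset Printing Implicit Defensive.

Section Cyc.
Variable T : finType.
Implicit Types (s : {perm T}) (x y : T).

Definition cc s := #|porbits s|.

Lemma cc_mul s x y : cc (s * tperm x y)%g + (x \notin porbit s y).*2 = cc s + (x != y).
Proof.
rewrite /cc -porbitsV invMg tpermV.
have := porbits_mul_tperm (s^-1)%g x y; rewrite /= porbitV porbitsV => ->.
by [].
Qed.

Lemma cc_lb s x y : cc s <= (cc (s * tperm x y)%g).+1.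
Proof.
have := cc_mul s x y; case: (boolP (x \in porbit s y)) => /= H.
  case: (x != y) => /=; lia.
have -> : x != y by apply: contraNneq H => ->; exact: porbit_id.
move=> /= E; lia.
Qed.

Lemma cc_ub s x y : cc (s * tperm x y)%g <= (cc s).+1.
Proof. have := cc_mul s x y; case: (x \notin _); case: (x != y) => /=; lia. Qed.

Lemma cc_split s x : s x != x -> cc (s * tperm x (s x))%g = (cc s).+1.
Proof.
move=> H; have := cc_mul s x (s x).
have -> : x \in porbit s (s x).
  by rewrite porbit_sym -[s x]/((s ^+ 1)%g x) ?mem_porbit // expg1.
rewrite eq_sym H /=; lia.
Qed.

Lemma cc_le s : cc s <= #|T|.
Proof. exact: leq_imset_card. Qed.

Lemma cc1 : cc 1%g = #|T|.
Proof.
rewrite /cc /porbits card_imset // => x y /eqP; rewrite eq_porbit_mem.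
by rewrite porbit.unlock cycle1 imset_set1 /aperm perm1 inE => /eqP.
Qed.

Lemma cc_eq s : cc s = #|T| -> s = 1%g.
Proof.
move=> E; apply/permP => x; rewrite perm1; apply/eqP/negPn/negP => H.
have := cc_split H; have := cc_le (s * tperm x (s x))%g; lia.
Qed.
End Cyc.
Section Main.
Variable n : nat.
Hypothesis hn : 1 < n.
Implicit Types v t u w s : {perm 'I_n}.
Definition a0 : 'I_n := Ordinal (ltnW hn).
Definition a1 : 'I_n := Ordinal hn.
Definition sg : {perm 'I_n} := tperm a0 a1.
Definition MM (v : {perm 'I_n}) := maxn (cc v) (cc (v * sg)%g).
Definition ff (v : {perm 'I_n}) := n - MM v.

Lemma sgK : (sg * sg = 1)%g.
Proof. exact: tperm2. Qed.

Lemma sg_conj x y : (sg * tperm x y * sg)%g = tperm (sg x) (sg y).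
Proof. by rewrite -[RHS]tpermJ conjgE /sg tpermV mulgA. Qed.

Lemma MM_le v : MM v <= n.
Proof. by rewrite /MM geq_max; have := cc_le v; have := cc_le (v * sg)%g; rewrite card_ord => -> ->. Qed.

Lemma TAn_mk x y : x != y -> (sg * tperm x y)%g \in TAn n.
Proof.
move=> Hxy; rewrite inE; apply/existsP; exists a0; apply/existsP; exists a1.
case: (ltngtP x y) => H.
- by apply/existsP; exists x; apply/existsP; exists y; rewrite H /= eqxx.
- by apply/existsP; exists y; apply/existsP; exists x; rewrite H /= tpermC eqxx.
- by move: Hxy; rewrite (val_inj H) eqxx.
Qed.

Lemma TAn_inv t : t \in TAn n -> exists i j, i != j /\ t = (sg * tperm i j)%g.
Proof.
rewrite inE => /existsP[a /existsP[b /existsP[i /existsP[j /and4P[ha hb hij /eqP ->]]]]].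
have -> : a = a0 by apply: val_inj; rewrite /= (eqP ha).
have -> : b = a1 by apply: val_inj; rewrite /= (eqP hb).
exists i, j; split => //; by rewrite neq_ltn hij.
Qed.

Lemma ff_mul v t : t \in TAn n -> ff (v * t)%g <= (ff v).+1.
Proof.
case/TAn_inv => i [j [_ ->]].
have h1 := cc_lb (v * sg)%g i j.
have h2 := cc_lb v (sg i) (sg j).
have E1 : (v * (sg * tperm i j) * sg)%g = (v * tperm (sg i) (sg j))%g.
  by rewrite -sg_conj !mulgA.
have E2 : (v * (sg * tperm i j))%g = (v * sg * tperm i j)%g by rewrite mulgA.
have := MM_le v; have := MM_le (v * (sg * tperm i j))%g.
rewrite /ff /MM E1 E2 in h1 h2 *; lia.
Qed.

Lemma ff1 : ff 1%g = 0.
Proof. by rewrite /ff /MM cc1 card_ord; have := MM_le 1%g; rewrite /MM cc1 card_ord; lia. Qed.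

Lemma prodsT_ff r v : v \in prodsT n r -> ff v <= r.
Proof.
elim: r v => [|r IH] v /=; first by rewrite inE => /eqP ->; rewrite ff1.
case/imset2P => x t Hx Ht ->.
by apply: leq_trans (ff_mul x Ht) _; rewrite ltnS; exact: IH.
Qed.

Lemma odd_sg : odd_perm sg.
Proof. by rewrite /sg odd_tperm; apply/eqP => /(congr1 val). Qed.

Lemma ff0 v : ~~ odd_perm v -> ff v = 0 -> v = 1%g.
Proof.
move=> Hv; have := MM_le v; rewrite /ff /MM => Hle H0.
have Hm : maxn (cc v) (cc (v * sg)%g) = n by lia.
case: (leqP (cc (v * sg)%g) (cc v)) => h.
  by apply: cc_eq; rewrite card_ord; move: Hm; rewrite (maxn_idPl h).
have : cc (v * sg)%g = #|'I_n| by move: Hm; rewrite (maxn_idPr (ltnW h)) card_ord.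
move/cc_eq => E; have Ev : v = sg by rewrite -(mulg1 v) -sgK mulgA E mul1g.
by move: Hv; rewrite Ev odd_sg.
Qed.

Lemma one_TAn : 1%g \in TAn n.
Proof. rewrite -sgK; apply: TAn_mk; by apply/eqP => /(congr1 val). Qed.

Lemma prodsT_mono r v : v \in prodsT n r -> v \in prodsT n r.+1.
Proof. by move=> H; rewrite /= -[v]mulg1; apply: imset2_f => //; exact: one_TAn. Qed.

Lemma moved w : w != 1%g -> exists x, w x != x.
Proof.
case: (pickP (fun x => w x != x)) => [x Hx|H]; first by exists x.
by move/eqP; case; apply/permP => x; rewrite perm1; apply/eqP; move: (H x) => /= /negbFE.
Qed.

Lemma cc_lt1 w : cc w < n -> w != 1%g.
Proof. by apply: contraTneq => ->; rewrite cc1 card_ord ltnn. Qed.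

Lemma upper k v : ~~ odd_perm v -> ff v <= k -> v \in prodsT n k.
Proof.
elim: k v => [|k IH] v Hv Hf.
  by rewrite (ff0 Hv) ?inE //; lia.
case: (leqP (ff v) k) => Hk; first by apply: prodsT_mono; exact: IH.
have HM : MM v < n by move: Hk; rewrite /ff; lia.
have Ex : forall u t, t \in TAn n -> ~~ odd_perm u -> v = (u * t)%g ->
     MM v < MM u -> v \in prodsT n k.+1.
  move=> u t Ht Hu Ev Hlt; rewrite Ev; apply: imset2_f => //; apply: IH => //.
  by move: Hf Hlt; have := MM_le u; rewrite /ff; lia.
case: (leqP (cc (v * sg)%g) (cc v)) => h.
- have [x Hx] : exists x, v x != x.
    by apply: moved; apply: cc_lt1; move: HM; rewrite /MM (maxn_idPl h).
  have Hxy : x != v x by rewrite eq_sym.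
  apply: (Ex (v * tperm x (v x) * sg)%g (sg * tperm x (v x))%g).
  + exact: TAn_mk.
  + by rewrite !odd_permM odd_tperm Hxy odd_sg (negbTE Hv).
  + by rewrite !mulgA -(mulgA _ sg sg) /sg tperm2 mulg1 -mulgA tperm2 mulg1.
  + rewrite /MM -(mulgA _ sg sg) /sg tperm2 mulg1 -/sg cc_split // (maxn_idPl h); lia.
- set w := (v * sg)%g.
  have [x Hx] : exists x, w x != x.
    by apply: moved; apply: cc_lt1; move: HM; rewrite /MM (maxn_idPr (ltnW h)).
  have Hxy : x != w x by rewrite eq_sym.
  have Hs : sg x != sg (w x) by rewrite (inj_eq perm_inj).
  apply: (Ex (v * tperm (sg x) (sg (w x)) * sg)%g (sg * tperm (sg x) (sg (w x)))%g).
  + exact: TAn_mk.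
  + by rewrite !odd_permM odd_tperm Hs odd_sg (negbTE Hv).
  + by rewrite !mulgA -(mulgA _ sg sg) /sg tperm2 mulg1 -mulgA tperm2 mulg1.
  + have -> : (v * tperm (sg x) (sg (w x)) * sg)%g = (w * tperm x (w x))%g.
      have E : tperm x (w x) = (sg * tperm (sg x) (sg (w x)) * sg)%g.
        by rewrite sg_conj /sg !tpermK.
      by rewrite E /w !mulgA -(mulgA _ sg sg) /sg tperm2 mulg1.
    by rewrite /MM cc_split // (maxn_idPr (ltnW h)) leq_max ltnSn.
Qed.

Lemma ellT_ff v : v \in Alt 'I_n -> ellT v = ff v.
Proof.
rewrite Alt_even => Hv; rewrite /ellT.
case: excluded_middle_informative => [H|H]; last first.
  by exfalso; apply: H; exists (ff v); exact: upper.
case: ex_minnP => m Hm Hmin; apply/eqP; rewrite eqn_leq prodsT_ff // andbT.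
by apply: Hmin; exact: upper.
Qed.

Definition Sk k := [set s : {perm 'I_n} | [forall x : 'I_n, (k <= x) ==> (s x == x)]].
Definition FF s : {poly int} := ('X^(n - cc s))%R.

Lemma Sk0 : Sk 0 = [set 1%g].
Proof.
apply/setP => s; rewrite !inE; apply/forallP/eqP => [H|->].
  by apply/permP => x; rewrite perm1; apply/eqP; exact: (H x).
by move=> x; rewrite perm1 eqxx implybT.
Qed.

Lemma SkN : Sk n = setT.
Proof. by apply/setP => s; rewrite !inE; apply/forallP => x; rewrite leqNgt ltn_ord. Qed.

Lemma Sk_filter k (hk : k < n) (j : 'I_n) (hj : j <= k) s :
  ((s * tperm j (Ordinal hk))%g \in Sk k.+1) && ((s * tperm j (Ordinal hk))%g (Ordinal hk) == j)
  = (s \in Sk k).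
Proof.
set K := Ordinal hk; set t := tperm j K.
rewrite !inE; apply/andP/forallP => [[/forallP H1 /eqP H2] x|H].
  apply/implyP => hx; have -> : s = (s * t * t)%g by rewrite -mulgA tperm2 mulg1.
  rewrite permM; case: (ltngtP k x) => h.
  - move/implyP: (H1 x) => /(_ h) /eqP ->; rewrite permE /= ifF ?ifF //.
      by apply/eqP => /(congr1 val) /= E; move: h; rewrite E ltnn.
    by apply/eqP => /(congr1 val) /= E; move: h; rewrite E ltnNge hj.
  - by move: hx; rewrite leqNgt h.
  - have -> : x = K by apply: val_inj.
    by rewrite H2 tpermL.
split.
  apply/forallP => x; apply/implyP => hx; rewrite permM.
  move/implyP: (H x) => /(_ (ltnW hx)) /eqP ->; rewrite permE /= ifF ?ifF //.
    by apply/eqP => /(congr1 val) /= E; move: hx; rewrite E ltnn.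
  by apply/eqP => /(congr1 val) /= E; move: hx; rewrite E ltnNge hj.
rewrite permM; move/implyP: (H K) => /(_ (leqnn _)) /eqP ->.
by rewrite tpermR.
Qed.

Lemma porbit_fix s x y : s x = x -> y \in porbit s x -> y = x.
Proof. by move=> Hx /porbitP [i ->]; rewrite permX iter_fix. Qed.

Lemma FF_step k (hk : k < n) (j : 'I_n) s : s \in Sk k ->
  FF (s * tperm j (Ordinal hk))%g = ((if j == Ordinal hk then 1 else 'X) * FF s)%R.
Proof.
set K := Ordinal hk => Hs.
case: eqP => [->|Hj]; first by rewrite tperm1 mulg1 mul1r.
have Hfix : s K = K by move: Hs; rewrite inE => /forallP /(_ K) /implyP /(_ (leqnn _)) /eqP.
have := cc_mul s j K.
have -> : j \notin porbit s K by apply/negP => /(porbit_fix Hfix).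
have -> : j != K by apply/eqP.
have := cc_le s; rewrite card_ord /FF => h1 h2.
rewrite /= in h2.
have -> : n - cc (s * tperm j K)%g = (n - cc s).+1.
  rewrite -muln2 in h2; move: h2 h1; set a := cc (s * _)%g; set b := cc s; lia.
by rewrite exprS.
Qed.

Lemma Sk_bound k (hk : k < n) s : s \in Sk k.+1 -> s (Ordinal hk) <= k.
Proof.
move=> Hs; rewrite leqNgt; apply/negP => h.
move: Hs; rewrite inE => /forallP H.
have E : s (s (Ordinal hk)) = s (Ordinal hk) by apply/eqP; apply: (implyP (H _)).
by have := perm_inj E => /(congr1 val) /= E2; move: h; rewrite E2 ltnn.
Qed.

Lemma sum_G k (hk : k < n) :
  (\sum_(j : 'I_n | (j <= k)%N) (if j == Ordinal hk then 1 else 'X) : {poly int})%R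
  = (1 + k%:R *: 'X)%R.
Proof.
transitivity (\sum_(j < n | (j <= k)%N) (if nat_of_ord j == k then 1 else 'X) : {poly int})%R.
  by apply: eq_bigr => j _.
rewrite -(big_mkord (fun j => (j <= k)%N) (fun j => if j == k then 1%R else 'X%R : {poly int})).
have := big_nat_widen 0 k.+1 n xpredT (fun j => (if j == k then 1 else 'X) : {poly int})%R hk.
rewrite /= => <-.
rewrite big_nat_recr //= eqxx.
rewrite (eq_big_nat _ _ (F2 := fun _ => 'X%R)); last by move=> i /andP[_ h]; rewrite ltn_eqF.
by rewrite sumr_const_nat subn0 scaler_nat addrC.
Qed.

Lemma Sk_sum k : k <= n ->
  (\sum_(s in Sk k) FF s = \prod_(0 <= t < k) (1 + t%:R *: 'X : {poly int}))%R.
Proof.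
elim: k => [_|k IH hk].
  by rewrite Sk0 big_set1 big_nil /FF cc1 card_ord subnn expr0.
rewrite big_nat_recr //= -IH ?(ltnW hk) //.
rewrite (partition_big (fun s => s (Ordinal hk)) (fun j : 'I_n => j <= k)); last first.
  by move=> s; exact: Sk_bound.
rewrite -(sum_G hk) big_distrr /=.
apply: eq_bigr => j hj.
rewrite (reindex_inj (mulIg (tperm j (Ordinal hk)))) /=.
rewrite (eq_bigl (fun s => s \in Sk k)); last by move=> s; exact: Sk_filter.
rewrite mulr_suml; apply: eq_bigr => s Hs.
rewrite mulrC; exact: FF_step.
Qed.

Lemma pair_sum v : (FF v + FF (v * sg)%g = (1 + 'X) * 'X^(ff v))%R.
Proof.
have h := cc_mul v a0 a1.
have Ha : a0 != a1 by apply/eqP => /(congr1 val).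
have h1 := cc_le v; have h2 := cc_le (v * sg)%g.
rewrite card_ord in h1 h2; rewrite Ha -muln2 in h.
rewrite /FF /ff /MM; move: h h1 h2.
set a := cc v; set b := cc (v * _)%g.
case: (a0 \notin _) => /= h h1 h2.
- have -> : maxn a b = a by apply/maxn_idPl; lia.
  have -> : n - b = (n - a).+1 by lia.
  rewrite exprS mulrDl mul1r addrC; reflexivity.
- have -> : maxn a b = b.
    apply/maxn_idPr.
    lia.
  have -> : n - a = (n - b).+1 by lia.
  by rewrite exprS mulrDl mul1r addrC.
Qed.

Lemma sum_all : (\sum_(s in [set: {perm 'I_n}]) FF s
   = (1 + 'X) * \sum_(v in Alt 'I_n) 'X^(ff v))%R.
Proof.
under eq_bigl => s do rewrite inE.
rewrite (bigID (fun s => s \in Alt 'I_n)) /=.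
rewrite [X in (_ + X)%R](reindex_inj (mulIg sg)) /=.
rewrite mulr_sumr [RHS](eq_bigr (fun v => FF v + FF (v * sg)%g)%R); last by move=> v _; symmetry; exact: pair_sum.
rewrite big_split /=; congr (_ + _)%R.
apply: eq_bigl => s.
by rewrite !Alt_even odd_permM odd_sg addbT negbK.
Qed.
End Main.

Lemma one_addX_neq0 : (1 + 'X : {poly int})%R != 0%R.
Proof. by apply/eqP => /(congr1 (horner^~ 0%R)); rewrite !hornerE. Qed.
Unset Implicit Arguments.
Local Open Scope ring_scope.

Theorem theorem7p2 (n : nat) (hn : (2 <= n)%N) :
  (\sum_(v in Alt ('I_n)) 'X^(ellT v) : {poly int})
    = \sum_(k < n.+1) (aT n k)%:R *: 'X^k
  /\ \sum_(k < n.+1) ((aT n k)%:R *: 'X^k : {poly int})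
    = \prod_(2 <= t < n) (1 + t%:R *: 'X).
Proof.
have P1 : (\sum_(v in Alt ('I_n)) 'X^(ellT v) : {poly int})
    = \sum_(k < n.+1) (aT n k)%:R *: 'X^k.
  rewrite (partition_big (fun v => inord (ellT v) : 'I_n.+1) xpredT) //=.
  apply: eq_bigr => k _.
  rewrite (eq_big (fun v => v \in [set v in Alt 'I_n | ellT v == k]) (fun _ => 'X^k)).
  - by rewrite sumr_const scaler_nat.
  - move=> v; rewrite inE; case Hv: (v \in Alt 'I_n) => //=.
    rewrite -val_eqE /= inordK // ltnS (ellT_ff hn Hv) /ff; exact: leq_subr.
  - move=> v /andP [Hv /eqP <-]; rewrite inordK // ltnS (ellT_ff hn Hv); exact: leq_subr.
split => //; rewrite -P1.
rewrite (eq_bigr (fun v => 'X^(ff hn v))); last by move=> v Hv; rewrite (ellT_ff hn Hv).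
apply: (mulfI one_addX_neq0).
rewrite -sum_all.
have := Sk_sum hn (leqnn n); rewrite SkN => ->.
by rewrite (big_ltn (ltnW hn)) (big_ltn hn) /= scale0r addr0 mul1r scale1r.
Qed.
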